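(* Let $a\in\mathbb{R}$, $\sigma>0$, $\gamma>0$, $\lambda>0$, $T\ge1$, channel transition probabilities $p_{cc'}$, and let $\tilde V_t$, $t=0,\ldots,T$, be defined on $\mathbb{R}_+\times\{0,1\}$ by the folded value iteration in the context. Then for each $c\in\{0,1\}$ and each $t\in\{0,1,\ldots,T\}$, the function $\tilde\Delta\mapsto\tilde V_t(\tilde\Delta,c)$ is non-decreasing on $\mathbb{R}_+$.
   Context: $p_{01},p_{10}\in[0,1]$, $p_{00}=1-p_{01}$, $p_{11}=1-p_{10}$; $\psi(v)=e^{-v^2/(2\sigma^2)}$, $\varphi(v,s)=\psi(v-s)+\psi(v+s)$; $\mathbb{R}_+=[0,\infty)$. Folded recursion: $\tilde V_0\equiv1$, $\tilde Q_{t+1}(\tilde\Delta,c;0)=e^{\gamma\tilde\Delta^2}\sum_{c_+\in\{0,1\}}p_{cc_+}\int_{\mathbb{R}_+}\varphi(\tilde\Delta_+,a\tilde\Delta)\tilde V_t(\tilde\Delta_+,c_+)d\tilde\Delta_+$, $\tilde Q_{t+1}(\tilde\Delta,c;1)=(1-c)e^{\gamma(\lambda+\tilde\Delta^2)}\sum_{c_+}p_{cc_+}\int_{\mathbb{R}_+}\varphi(\tilde\Delta_+,a\tilde\Delta)\tilde V_t(\tilde\Delta_+,c_+)d\tilde\Delta_++2c\,e^{\gamma\lambda}\sum_{c_+}p_{cc_+}\int_{\mathbb{R}_+}\psi(\tilde\Delta_+)\tilde V_t(\tilde\Delta_+,c_+)d\tilde\Delta_+$, $\tilde V_{t+1}(\tilde\Delta,c)=\min_{u\in\{0,1\}}\tilde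 Q_{t+1}(\tilde\Delta,c;u)$. This is the value iteration of the ''folded'' risk-sensitive MDP for an estimation error magnitude $\tilde\Delta$ and Gilbert–Elliott channel state $c$. *)

(* Defs.v *)
From HB Require Import structures.
From mathcomp Require Import all_boot all_order all_algebra.
From mathcomp Require Import all_classical all_reals all_analysis.
Set Implicit Arguments. Unset Strict Implicit. Unset Printing Implicit Defensive.
Import Order.TTheory GRing.Theory Num.Theory.
Local Open Scope classical_set_scope.
Local Open Scope ring_scope.

Section Folded.
Variable R : realType.

Definition psi (sigma v : R) : R := expR (- (v ^+ 2) / (2 * sigma ^+ 2)).
Definition varphi (sigma v s : R) : R := psi sigma (v - s) + psi sigma (v + s).

(* channel states c in {0,1} encoded as bool (false = 0, true = 1);
   p c c' is the transition probability p_{cc'} *)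
Definition ptrans (p01 p10 : R) (c c' : bool) : R :=
  match c, c' with
  | false, false => 1 - p01
  | false, true => p01
  | true, false => p10
  | true, true => 1 - p10
  end.

Definition intRp (f : R -> \bar R) : \bar R :=
  (\int[lebesgue_measure]_(x in `[0%R, +oo[) f x)%E.

Definition kernel_term (p01 p10 : R) (k : R -> R) (V : R -> bool -> \bar R)
    (c : bool) : \bar R :=
  (\sum_(cp : bool) (ptrans p01 p10 c cp)%:E * intRp (fun x => (k x)%:E * V x cp))%E.

Definition Qt0 (a sigma gamma p01 p10 : R) (V : R -> bool -> \bar R)
    (D : R) (c : bool) : \bar R :=
  ((expR (gamma * D ^+ 2))%:E *
    kernel_term p01 p10 (fun x => varphi sigma x (a * D)) V c)%E.

Definition Qt1 (a sigma gamma lambda p01 p10 : R) (V : R -> bool -> \bar R)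
    (D : R) (c : bool) : \bar R :=
  (((1 - (c : nat)%:R) * expR (gamma * (lambda + D ^+ 2)))%:E *
      kernel_term p01 p10 (fun x => varphi sigma x (a * D)) V c
   + (2 * (c : nat)%:R * expR (gamma * lambda))%:E *
      kernel_term p01 p10 (fun x => psi sigma x) V c)%E.

Fixpoint Vt (a sigma gamma lambda p01 p10 : R) (t : nat) : R -> bool -> \bar R :=
  match t with
  | 0 => fun _ _ => 1%E
  | t'.+1 => fun D c =>
      Order.min (Qt0 a sigma gamma p01 p10 (Vt a sigma gamma lambda p01 p10 t') D c)
                (Qt1 a sigma gamma lambda p01 p10 (Vt a sigma gamma lambda p01 p10 t') D c)
  end.

End Folded.

(* Main.v *)
Require Import Defs.
From HB Require Import structures.
From mathcomp Require Import all_boot all_order all_algebra.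
From mathcomp Require Import all_classical all_reals all_analysis.
From mathcomp Require Import measurable_realfun lebesgue_measure lebesgue_integral ftc normal_distribution exp.
From mathcomp Require Import ring lra.
Import Order.TTheory GRing.Theory Num.Theory.
Import numFieldTopology.Exports.
Local Open Scope classical_set_scope.
Local Open Scope ring_scope.
Definition Ch {R : realType} (u : R) := expR u + expR (- u).

Lemma Ch_mul (R : realType) (a b : R) : Ch a * Ch b = Ch (a + b) + Ch (a - b).
Proof.
rewrite /Ch mulrDl !mulrDr -!expRD opprD opprB.
have -> : - a + b = b - a by ring.
have -> : - a + - b = - b - a by ring.
ring.
Qed.

Lemma Ch_even (R : realType) (u : R) : Ch (- u) = Ch u.
Proof. by rewrite /Ch opprK addrC. Qed.

Lemma Ch_mono (R : realType) (a b : R) : 0 <= a -> a <= b -> Ch a <= Ch b.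
Proof.
move=> a0 ab; rewrite /Ch -subr_ge0.
have -> : expR b + expR (- b) - (expR a + expR (- a)) =
  (expR b - expR a) * (1 - expR (- (a + b))).
  rewrite mulrBr mulr1 mulrBl -!expRD.
  have -> : b + - (a + b) = - a by ring.
  have -> : a + - (a + b) = - b by ring.
  ring.
apply: mulr_ge0; first by rewrite subr_ge0 ler_expR.
rewrite subr_ge0 -expR0 ler_expR oppr_le0; lra.
Qed.

Lemma Ch_norm (R : realType) (u : R) : Ch u = Ch `|u|.
Proof. by case: (ger0P u) => // _; rewrite Ch_even. Qed.

Lemma Ch_mono_sq (R : realType) (u w : R) : u ^+ 2 <= w ^+ 2 -> Ch u <= Ch w.
Proof.
move=> h; rewrite (Ch_norm _ u) (Ch_norm _ w); apply: Ch_mono => //.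
have h' : `|u| ^+ 2 <= `|w| ^+ 2 by rewrite -!normrX !ger0_norm ?sqr_ge0.
by rewrite -(@ler_pXn2r _ 2) // nnegrE normr_ge0.
Qed.

Lemma varphiE (R : realType) (sigma x s : R) : sigma != 0 ->
  varphi sigma x s = expR (- (x ^+ 2 + s ^+ 2) / (2 * sigma ^+ 2)) * Ch (x * s / sigma ^+ 2).
Proof.
move=> s0; rewrite /varphi /psi /Ch mulrDr -!expRD.
congr (expR _ + expR _); field; rewrite ?expf_neq0 //.
Qed.

Lemma varphi_gt0 (R : realType) (sigma x s : R) : 0 < varphi sigma x s.
Proof. by rewrite /varphi addr_gt0 // expR_gt0. Qed.

Lemma varphi_mlr (R : realType) (sigma x y s1 s2 : R) : 0 < sigma ->
  0 <= y -> y <= x -> 0 <= s1 -> s1 <= s2 ->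
  varphi sigma x s1 * varphi sigma y s2 <= varphi sigma x s2 * varphi sigma y s1.
Proof.
move=> sg y0 yx s10 s12; have s0 : sigma != 0 by rewrite gt_eqF.
rewrite !varphiE // mulrACA [X in _ <= X]mulrACA -!expRD.
have -> : - (x ^+ 2 + s2 ^+ 2) / (2 * sigma ^+ 2) + - (y ^+ 2 + s1 ^+ 2) / (2 * sigma ^+ 2)
  = - (x ^+ 2 + s1 ^+ 2) / (2 * sigma ^+ 2) + - (y ^+ 2 + s2 ^+ 2) / (2 * sigma ^+ 2).
  by ring.
apply: ler_wpM2l; first exact: expR_ge0.
rewrite !Ch_mul; set u := (sigma ^+ 2)^-1.
have u0 : 0 <= u by rewrite invr_ge0 sqr_ge0.
apply: lerD; apply: Ch_mono_sq; rewrite -subr_ge0.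
- have -> : (x * s2 / sigma ^+ 2 + y * s1 / sigma ^+ 2) ^+ 2 -
     (x * s1 / sigma ^+ 2 + y * s2 / sigma ^+ 2) ^+ 2 =
     u ^+ 2 * ((x - y) * (s2 - s1)) * ((x * s2 + y * s1) + (x * s1 + y * s2)).
    by rewrite /u; ring.
  apply: mulr_ge0; first apply: mulr_ge0; first exact: sqr_ge0.
    by apply: mulr_ge0; rewrite subr_ge0.
  apply: addr_ge0; apply: addr_ge0; apply: mulr_ge0 => //; lra.
- have -> : (x * s2 / sigma ^+ 2 - y * s1 / sigma ^+ 2) ^+ 2 -
     (x * s1 / sigma ^+ 2 - y * s2 / sigma ^+ 2) ^+ 2 =
     u ^+ 2 * ((x ^+ 2 - y ^+ 2) * (s2 ^+ 2 - s1 ^+ 2)).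
    by rewrite /u; ring.
  apply: mulr_ge0; first exact: sqr_ge0.
  apply: mulr_ge0; rewrite subr_ge0 ler_pXn2r // nnegrE; lra.
Qed.

Lemma varphi_order (R : realType) (sigma s1 s2 x y : R) : 0 < sigma ->
  0 <= s1 -> s1 <= s2 -> 0 <= x -> 0 <= y ->
  varphi sigma x s2 <= varphi sigma x s1 ->
  varphi sigma y s1 < varphi sigma y s2 -> x <= y.
Proof.
move=> sg s10 s12 x0 y0 hx hy; rewrite leNgt; apply/negP => yx.
have := @varphi_mlr R sigma x y s1 s2 sg y0 (ltW yx) s10 s12.
have p1 := varphi_gt0 _ sigma x s1; have p2 := varphi_gt0 _ sigma y s1.
have : varphi sigma x s2 * varphi sigma y s1 <= varphi sigma x s1 * varphi sigma y s1.
  by rewrite ler_pM2r.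
have : varphi sigma x s1 * varphi sigma y s1 < varphi sigma x s1 * varphi sigma y s2.
  by rewrite ltr_pM2l.
lra.
Qed.

Lemma psi_cont {R : realType} (sigma m : R) : continuous (fun x => psi sigma (x - m)).
Proof.
move=> x; apply: (cvg_comp _ expR); last exact: continuous_expR.
apply: cvgM; last exact: cvg_cst.
apply: (@cvgN _ R^o).
apply: (cvg_comp (fun x => x - m) (fun x => x ^+ 2)).
  by apply: (@cvgB _ R^o) => //; [exact: cvg_id|exact: cvg_cst].
exact: sqr_continuous.
Qed.

Lemma psi_even {R : realType} (sigma v : R) : psi sigma (- v) = psi sigma v.
Proof. by rewrite /psi sqrrN. Qed.

Lemma psi_ge0 {R : realType} (sigma v : R) : 0 <= psi sigma v.
Proof. exact: expR_ge0. Qed.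

Lemma mpsi {R : realType} (sigma m : R) (D : set R) :
  measurable_fun D (fun x => (psi sigma (x - m))%:E).
Proof.
apply/measurable_funTS/measurable_EFinP; exact: continuous_measurable_fun (psi_cont sigma m).
Qed.

Lemma int_psi {R : realType} (sigma m : R) : 0 < sigma ->
  (\int[lebesgue_measure]_x (psi sigma (x - m))%:E = (normal_peak sigma)^-1%:E)%E.
Proof.
move=> s0; have sn0 : sigma != 0 by rewrite gt_eqF.
have pk0 : normal_peak sigma != 0 by rewrite gt_eqF // normal_peak_gt0.
have H := integral_normal_pdf m sigma.
rewrite /normal_pdf (negbTE sn0) in H.
have {}H : (\int[lebesgue_measure]_x ((normal_peak sigma)%:E * (normal_fun m sigma x)%:E) = 1)%E.
  by rewrite -H; apply: eq_integral => x _; rewrite EFinM.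
rewrite ge0_integralZl_EFin //= in H; last 3 first.
- by move=> x _; rewrite lee_fin normal_fun_ge0.
- by apply/measurable_EFinP; exact: measurable_normal_fun.
- exact: normal_peak_ge0.
have -> : (fun x => (psi sigma (x - m))%:E) = (fun x => (normal_fun m sigma x)%:E).
  by apply/funext => x; rewrite /psi /normal_fun mulr_natl mulrC.
rewrite -[X in X = _]mul1e -(mulVf pk0) EFinM -muleA H mule1 //.
Qed.

Lemma mass {R : realType} (sigma s : R) : 0 < sigma ->
  (\int[lebesgue_measure]_(x in `[0%R, +oo[) (varphi sigma x s)%:E
   = (normal_peak sigma)^-1%:E)%E.
Proof.
move=> s0.
rewrite /varphi.
under eq_integral do rewrite EFinD.
rewrite ge0_integralD //; last 4 first.
- by move=> x _; rewrite lee_fin psi_ge0.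
- exact: mpsi.
- by move=> x _; rewrite lee_fin psi_ge0.
- have -> : (fun x => (psi sigma (x + s))%:E) = (fun x => (psi sigma (x - - s))%:E).
    by apply/funext => x; rewrite opprK.
  exact: mpsi.
have -> : (\int[lebesgue_measure]_(x in `[0%R, +oo[) (psi sigma (x + s))%:E =
   \int[lebesgue_measure]_(x in `]-oo, 0%R]) (psi sigma (x - s))%:E)%E.
  have := @ge0_integration_by_substitutionNy R (fun x => psi sigma (x - s)) 0.
  rewrite oppr0 => ->.
  - by apply: eq_integral => x _; rewrite /= -opprD psi_even.
  - exact/continuous_subspaceT/psi_cont.
  - by move=> x _; exact: psi_ge0.
rewrite addeC -integral_itv_bndo_bndc; last exact: mpsi.
rewrite -ge0_integral_setU //=; last 3 first.
- exact: mpsi.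
- by move=> x _; rewrite lee_fin psi_ge0.
- by rewrite -setCitvl; exact/disj_setPCl.
rewrite -setCitvl setUv; exact: int_psi.
Qed.

Lemma AL {R : realType} (A B : set R) (f1 f2 : R -> R) (V : R -> \bar R) :
  measurable A -> measurable B -> [disjoint A & B] ->
  measurable_fun (A `|` B) f1 -> measurable_fun (A `|` B) f2 ->
  measurable_fun (A `|` B) V ->
  (forall x, (A `|` B) x -> 0 <= f1 x) -> (forall x, (A `|` B) x -> 0 <= f2 x) ->
  (forall x, (A `|` B) x -> (0 <= V x)%E) ->
  (forall x, A x -> f2 x <= f1 x) -> (forall x, B x -> f1 x <= f2 x) ->
  (forall x y, A x -> B y -> (V x <= V y)%E) ->
  (\int[lebesgue_measure]_(x in A `|` B) (f1 x)%:E =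
   \int[lebesgue_measure]_(x in A `|` B) (f2 x)%:E)%E ->
  (\int[lebesgue_measure]_(x in A `|` B) (f1 x)%:E < +oo)%E ->
  (\int[lebesgue_measure]_(x in A `|` B) ((f1 x)%:E * V x) <=
   \int[lebesgue_measure]_(x in A `|` B) ((f2 x)%:E * V x))%E.
Proof.
move=> mA mB dAB mf1 mf2 mV f10 f20 V0 hA hB hV hM hfin.
have mAB : measurable (A `|` B) by exact: measurableU.
have sA : A `<=` A `|` B by move=> x; left.
have sB : B `<=` A `|` B by move=> x; right.
pose v := maxe (ereal_sup (V @` A)) 0%E.
have v0 : (0 <= v)%E by rewrite le_max lexx orbT.
have hvA x : A x -> (V x <= v)%E.
  by move=> Ax; rewrite le_max; apply/orP; left; apply: ereal_sup_ubound; exists x.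
have hvB y : B y -> (v <= V y)%E.
  move=> By; rewrite ge_max; apply/andP; split; last by apply: V0; right.
  by apply: ge_ereal_sup => _ [x Ax <-]; exact: hV.
have mE1 : measurable_fun (A `|` B) (fun x => (f1 x)%:E) by exact/measurable_EFinP.
have mE2 : measurable_fun (A `|` B) (fun x => (f2 x)%:E) by exact/measurable_EFinP.
have mF1 : measurable_fun (A `|` B) (fun x => (f1 x)%:E * V x)%E by exact: emeasurable_funM.
have mF2 : measurable_fun (A `|` B) (fun x => (f2 x)%:E * V x)%E by exact: emeasurable_funM.
have mG12 : measurable_fun (A `|` B) (fun x => (f1 x - f2 x)%:E).
  by apply/measurable_EFinP; exact: measurable_funB.
have mG21 : measurable_fun (A `|` B) (fun x => (f2 x - f1 x)%:E).
  by apply/measurable_EFinP; exact: measurable_funB.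
set DA := (\int[lebesgue_measure]_(x in A) (f1 x - f2 x)%:E)%E.
set DB := (\int[lebesgue_measure]_(x in B) (f2 x - f1 x)%:E)%E.
have F1ge0 x : (A `|` B) x -> (0 <= (f1 x)%:E * V x)%E.
  by move=> h; rewrite mule_ge0 ?lee_fin ?f10 ?V0.
have F2ge0 x : (A `|` B) x -> (0 <= (f2 x)%:E * V x)%E.
  by move=> h; rewrite mule_ge0 ?lee_fin ?f20 ?V0.
have stepA : (\int[lebesgue_measure]_(x in A) ((f1 x)%:E * V x) <=
     \int[lebesgue_measure]_(x in A) ((f2 x)%:E * V x) + DA * v)%E.
  rewrite /DA -ge0_integralZr //; last 2 first.
  - exact: measurable_funS mG12.
  - by move=> x Ax; rewrite lee_fin subr_ge0 hA.
  rewrite -ge0_integralD //; last 4 first.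
  - by move=> x Ax; apply: F2ge0; left.
  - exact: measurable_funS mF2.
  - by move=> x Ax; rewrite mule_ge0 // lee_fin subr_ge0 hA.
  - apply: emeasurable_funM; first exact: measurable_funS mG12.
    exact: measurable_cst.
  apply: ge0_le_integral => //.
  - by move=> x Ax; apply: F1ge0; left.
  - exact: measurable_funS mF1.
  - apply: emeasurable_funD; first exact: measurable_funS mF2.
    apply: emeasurable_funM; first exact: measurable_funS mG12.
    exact: measurable_cst.
  move=> x Ax.
  have e : (f1 x)%:E = ((f2 x)%:E + (f1 x - f2 x)%:E)%E by rewrite -EFinD addrC subrK.
  rewrite {1}e ge0_muleDl ?lee_fin ?f20 ?subr_ge0 ?hA //; last by left.
  apply: leeD2l; apply: lee_wpmul2l.
    by rewrite lee_fin subr_ge0 hA.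
  exact: hvA.
have stepB : (\int[lebesgue_measure]_(x in B) ((f1 x)%:E * V x) + DB * v <=
     \int[lebesgue_measure]_(x in B) ((f2 x)%:E * V x))%E.
  rewrite /DB -ge0_integralZr //; last 2 first.
  - exact: measurable_funS mG21.
  - by move=> x Bx; rewrite lee_fin subr_ge0 hB.
  rewrite -ge0_integralD //; last 4 first.
  - by move=> x Bx; apply: F1ge0; right.
  - exact: measurable_funS mF1.
  - by move=> x Bx; rewrite mule_ge0 // lee_fin subr_ge0 hB.
  - apply: emeasurable_funM; first exact: measurable_funS mG21.
    exact: measurable_cst.
  apply: ge0_le_integral => //.
  - by move=> x Bx; rewrite adde_ge0 // ?mule_ge0 // ?lee_fin ?subr_ge0 ?hB //;
      [apply: f10; right | apply: V0; right].
  - apply: emeasurable_funD; first exact: measurable_funS mF1.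
    apply: emeasurable_funM; first exact: measurable_funS mG21.
    exact: measurable_cst.
  - exact: measurable_funS mF2.
  move=> x Bx.
  have e : (f2 x)%:E = ((f1 x)%:E + (f2 x - f1 x)%:E)%E by rewrite -EFinD addrC subrK.
  rewrite [in X in (_ <= X)%E]e ge0_muleDl ?lee_fin ?f10 ?subr_ge0 ?hB //; last by right.
  apply: leeD2l; apply: lee_wpmul2l.
    by rewrite lee_fin subr_ge0 hB.
  exact: hvB.
set IA1 := (\int[lebesgue_measure]_(x in A) (f1 x)%:E)%E.
set IA2 := (\int[lebesgue_measure]_(x in A) (f2 x)%:E)%E.
set IB1 := (\int[lebesgue_measure]_(x in B) (f1 x)%:E)%E.
set IB2 := (\int[lebesgue_measure]_(x in B) (f2 x)%:E)%E.
have e1 : (IA1 = IA2 + DA)%E.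
  rewrite /IA1 /IA2 /DA -ge0_integralD //; last 4 first.
  - by move=> x Ax; rewrite lee_fin f20 //; left.
  - exact: measurable_funS mE2.
  - by move=> x Ax; rewrite lee_fin subr_ge0 hA.
  - exact: measurable_funS mG12.
  by apply: eq_integral => x _; rewrite -EFinD addrC subrK.
have e2 : (IB2 = IB1 + DB)%E.
  rewrite /IB1 /IB2 /DB -ge0_integralD //; last 4 first.
  - by move=> x Bx; rewrite lee_fin f10 //; right.
  - exact: measurable_funS mE1.
  - by move=> x Bx; rewrite lee_fin subr_ge0 hB.
  - exact: measurable_funS mG21.
  by apply: eq_integral => x _; rewrite -EFinD addrC subrK.
have sp1 : (\int[lebesgue_measure]_(x in A `|` B) (f1 x)%:E = IA1 + IB1)%E.
  by rewrite ge0_integral_setU // => x h; rewrite lee_fin f10.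
have sp2 : (\int[lebesgue_measure]_(x in A `|` B) (f2 x)%:E = IA2 + IB2)%E.
  by rewrite ge0_integral_setU // => x h; rewrite lee_fin f20.
have IA20 : (0 <= IA2)%E by apply: integral_ge0 => x Ax; rewrite lee_fin f20 //; left.
have IB10 : (0 <= IB1)%E by apply: integral_ge0 => x Bx; rewrite lee_fin f10 //; right.
have DA0 : (0 <= DA)%E by apply: integral_ge0 => x Ax; rewrite lee_fin subr_ge0 hA.
have DB0 : (0 <= DB)%E by apply: integral_ge0 => x Bx; rewrite lee_fin subr_ge0 hB.
have Xfin : (IA2 + IB1)%E \is a fin_num.
  rewrite ge0_fin_numE; last exact: adde_ge0.
  apply: (le_lt_trans _ hfin).
  by rewrite sp1 e1 leeD2r // leeDl.
have DAB : (DA <= DB)%E.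
  rewrite -(leeD2lE _ _ Xfin).
  have -> : (IA2 + IB1 + DA = \int[lebesgue_measure]_(x in A `|` B) (f1 x)%:E)%E.
    by rewrite sp1 e1 addeAC.
  by rewrite hM sp2 e2 addeA.
rewrite !ge0_integral_setU //.
apply: le_trans (leeD2r _ stepA) _.
rewrite -addeA; apply: leeD2l.
apply: le_trans stepB.
rewrite addeC; apply: leeD2l.
exact: lee_wpmul2r.
Qed.

Lemma mono_meas {R : realType} (V : R -> \bar R) :
  (forall x y, 0 <= x -> x <= y -> (V x <= V y)%E) ->
  measurable_fun (`[0%R, +oo[ : set R) V.
Proof.
move=> hV mD; apply: (measurability _ (ErealGenCInfty.measurableE R)) => //.
move=> _ [_ [r ->] <-].
apply: is_interval_measurable => s t /= [] + hs [] + ht z /andP[sz zt].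
move: hs; rewrite in_itv /= andbT => hs.
move=> /[!in_itv]/=; rewrite andbT => s0 _; split.
  by rewrite andbT (le_trans s0 sz).
rewrite andbT.
exact: le_trans hs (hV _ _ s0 sz).
Qed.

Lemma varphi_meas {R : realType} (sigma s : R) (D : set R) :
  measurable_fun D (fun x => varphi sigma x s).
Proof.
apply: measurable_funTS; apply: measurable_funD.
  exact: continuous_measurable_fun (psi_cont sigma s).
have -> : (fun x => psi sigma (x + s)) = (fun x => psi sigma (x - - s)).
  by apply/funext => x; rewrite opprK.
exact: continuous_measurable_fun (psi_cont sigma (- s)).
Qed.

Lemma ML {R : realType} (sigma s1 s2 : R) (V : R -> \bar R) :
  0 < sigma -> 0 <= s1 -> s1 <= s2 -> (forall x, (0 <= V x)%E) ->
  (forall x y, 0 <= x -> x <= y -> (V x <= V y)%E) ->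
  (intRp (fun x => (varphi sigma x s1)%:E * V x) <=
   intRp (fun x => (varphi sigma x s2)%:E * V x))%E.
Proof.
move=> sg s10 s12 V0 hV.
pose D := (`[0%R, +oo[%classic : set R).
have mD : measurable D by exact: measurable_itv.
pose A := D `&` [set x | varphi sigma x s2 <= varphi sigma x s1].
have mA : measurable A by exact: measurable_fun_le (varphi_meas _ _ _) (varphi_meas _ _ _).
pose B := D `\` A.
have mB : measurable B by exact: measurableD.
have hU : A `|` B = D by apply: setDUK; exact: subIsetl.
have DA x : A x -> D x by case.
have DB x : B x -> D x by case.
have D0 x : D x -> 0 <= x by rewrite /D /= in_itv /= andbT.
rewrite /intRp -/D -hU.
apply: AL => //.
- by rewrite disj_set2E setDIK.
- exact: varphi_meas.
- exact: varphi_meas.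
- by rewrite hU; exact: mono_meas.
- by move=> x _; exact/ltW/varphi_gt0.
- by move=> x _; exact/ltW/varphi_gt0.
- by move=> x [] /=.
- move=> x [Dx /= nA]; rewrite ltW //; rewrite ltNge; apply/negP => h; apply: nA.
  by split.
- move=> x y Ax By; apply: hV; first by apply: D0; exact: DA.
  case: Ax => Dx hx; case: By => Dy nA.
  apply: (@varphi_order R sigma s1 s2 x y sg s10 s12 (D0 _ Dx) (D0 _ Dy) hx).
  by rewrite ltNge; apply/negP => h; apply: nA.
- by rewrite hU !mass.
- by rewrite hU mass // ltry.
Qed.

Lemma varphi_neg {R : realType} (sigma x s : R) : varphi sigma x (- s) = varphi sigma x s.
Proof. by rewrite /varphi opprK addrC. Qed.

Lemma varphi_abs {R : realType} (sigma x a D : R) :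
  varphi sigma x (a * D) = varphi sigma x (`|a| * D).
Proof.
case: (ger0P a) => // a0.
by rewrite mulNr varphi_neg.
Qed.

Lemma ptrans_ge0 {R : realType} (p01 p10 : R) c c' :
  0 <= p01 <= 1 -> 0 <= p10 <= 1 -> 0 <= ptrans p01 p10 c c'.
Proof. by move=> /andP[? ?] /andP[? ?]; case: c; case: c' => /=; lra. Qed.

Lemma kernel_ge0 {R : realType} (p01 p10 : R) (k : R -> R) V c :
  0 <= p01 <= 1 -> 0 <= p10 <= 1 -> (forall x, 0 <= k x) ->
  (forall x c', (0 <= V x c')%E) -> (0 <= kernel_term p01 p10 k V c)%E.
Proof.
move=> hp hq hk hV; rewrite /kernel_term big_bool.
apply: adde_ge0; apply: mule_ge0; rewrite ?lee_fin ?ptrans_ge0 //;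
  apply: integral_ge0 => x _; apply: mule_ge0 => //; rewrite lee_fin; exact: hk.
Qed.

Lemma kernel_mono {R : realType} (sigma p01 p10 s1 s2 : R) V c :
  0 < sigma -> 0 <= p01 <= 1 -> 0 <= p10 <= 1 -> 0 <= s1 -> s1 <= s2 ->
  (forall x c', (0 <= V x c')%E) ->
  (forall c' x y, 0 <= x -> x <= y -> (V x c' <= V y c')%E) ->
  (kernel_term p01 p10 (fun x => varphi sigma x s1) V c <=
   kernel_term p01 p10 (fun x => varphi sigma x s2) V c)%E.
Proof.
move=> sg hp hq s10 s12 V0 hV.
have h1 := @ML R sigma s1 s2 (fun x => V x true) sg s10 s12 (fun x => V0 x true) (hV true).
have h2 := @ML R sigma s1 s2 (fun x => V x false) sg s10 s12 (fun x => V0 x false) (hV false).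
rewrite /kernel_term !big_bool.
apply: leeD; apply: lee_wpmul2l => //; rewrite lee_fin; exact: ptrans_ge0.
Qed.

Lemma Vt_props {R : realType} (a sigma gamma lambda p01 p10 : R) (t : nat) :
  0 < sigma -> 0 < gamma -> 0 <= p01 <= 1 -> 0 <= p10 <= 1 ->
  (forall D c, (0 <= Vt a sigma gamma lambda p01 p10 t D c)%E) /\
  (forall c D1 D2, 0 <= D1 -> D1 <= D2 ->
     (Vt a sigma gamma lambda p01 p10 t D1 c <= Vt a sigma gamma lambda p01 p10 t D2 c)%E).
Proof.
move=> sg g0 hp hq; elim: t => [|t [V0 hV]] /=.
  by split => //.
set V := Vt a sigma gamma lambda p01 p10 t.
have hk D : (fun x => varphi sigma x (a * D)) = (fun x => varphi sigma x (`|a| * D)).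
  by apply/funext => x; exact: varphi_abs.
have c0 (c : bool) : 0 <= 1 - (c : nat)%:R :> R by case: c => /=; lra.
have c1 (c : bool) : 0 <= 2 * (c : nat)%:R :> R by case: c => /=; lra.
have Kge0 D c : (0 <= kernel_term p01 p10 (fun x => varphi sigma x D) V c)%E.
  by apply: kernel_ge0 => // x; exact/ltW/varphi_gt0.
have Pge0 c : (0 <= kernel_term p01 p10 (fun x => psi sigma x) V c)%E.
  by apply: kernel_ge0 => // x; exact: psi_ge0.
split.
  move=> D c; rewrite le_min; apply/andP; split.
    by rewrite /Qt0 mule_ge0 // lee_fin expR_ge0.
  by rewrite /Qt1 adde_ge0 // mule_ge0 // lee_fin mulr_ge0 // expR_ge0.
move=> c D1 D2 D10 D12.
have aD10 : 0 <= `|a| * D1 by rewrite mulr_ge0.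
have aD12 : `|a| * D1 <= `|a| * D2 by rewrite ler_wpM2l.
have KM : (kernel_term p01 p10 (fun x => varphi sigma x (`|a| * D1)) V c <=
           kernel_term p01 p10 (fun x => varphi sigma x (`|a| * D2)) V c)%E.
  by apply: kernel_mono => //; move=> c' x y x0 xy; exact: hV.
have sq : D1 ^+ 2 <= D2 ^+ 2 by rewrite ler_pXn2r // nnegrE; lra.
have e12 : expR (gamma * D1 ^+ 2) <= expR (gamma * D2 ^+ 2).
  by rewrite ler_expR; apply: ler_wpM2l => //; exact: ltW.
have e12' : expR (gamma * (lambda + D1 ^+ 2)) <= expR (gamma * (lambda + D2 ^+ 2)).
  by rewrite ler_expR; apply: ler_wpM2l; [exact: ltW | rewrite lerD2l].
have KM' : (kernel_term p01 p10 (fun x => varphi sigma x (a * D1)) V c <=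
           kernel_term p01 p10 (fun x => varphi sigma x (a * D2)) V c)%E.
  by rewrite (hk D1) (hk D2).
have Q0M : (Qt0 a sigma gamma p01 p10 V D1 c <= Qt0 a sigma gamma p01 p10 V D2 c)%E.
  apply: (lee_pmul _ _ _ KM'); [by rewrite lee_fin expR_ge0 | exact: Kge0 | by rewrite lee_fin].
have Q1M : (Qt1 a sigma gamma lambda p01 p10 V D1 c <= Qt1 a sigma gamma lambda p01 p10 V D2 c)%E.
  apply: leeD2r; apply: (lee_pmul _ _ _ KM').
  - by rewrite lee_fin mulr_ge0 // expR_ge0.
  - exact: Kge0.
  - by rewrite lee_fin; apply: ler_wpM2l.
rewrite le_min; apply/andP; split; rewrite ge_min; apply/orP; [left|right]; assumption.
Qed.

Local Close Scope classical_set_scope.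

Theorem proposition4 (R : realType) (a sigma gamma lambda p01 p10 : R) (T : nat) :
  0 < sigma -> 0 < gamma -> 0 < lambda -> (1 <= T)%N ->
  0 <= p01 <= 1 -> 0 <= p10 <= 1 ->
  forall (c : bool) (t : nat), (t <= T)%N ->
  forall D1 D2 : R, 0 <= D1 -> D1 <= D2 ->
  (Vt a sigma gamma lambda p01 p10 t D1 c <= Vt a sigma gamma lambda p01 p10 t D2 c)%E.
Proof.
move=> sg g0 _ _ hp hq c t _ D1 D2 h1 h2.
exact: ((@Vt_props R a sigma gamma lambda p01 p10 t sg g0 hp hq).2 c D1 D2 h1 h2).
Qed.
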